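(* Fix $w$ in the single-component setting, and suppose $\sigma\le1$. Then $L(w)\ge0.25\,p(0)\int_0^\infty\exp\big((|s(0)|-1)\delta-\frac\rho2\delta^2\big)\,d\delta$.
   Context: Single-component setting: $y$ uniform on $\{\pm1\}$; $x=(x_1,x_2)$, $x_1\in\mathbb{R}^{d_1}$, $x_2\sim\mathcal{N}(0,\Sigma_2)$ with $\Sigma_2\succ0$ independent of $x_1$. $\ell_{exp}(t)=\exp(-|t|)$, $L(w)=\mathbb{E}[\ell_{exp}(w^\top x)]$. For fixed $w=(w_1,w_2)$: $\sigma=\sqrt{w_2^\top\Sigma_2w_2}$; $p$ is the density of $\mu=w_1^\top x_1$, assumed such that $\log p$ is differentiable, $\nu$-strongly concave and $\rho$-smooth (i.e. $-\rho\le(\log p)''\le-\nu$) for some $0<\nu\le\rho$; $s(\mu)=\frac{p'(\mu)}{p(\mu)}$. Then $L(w)=\mathbb{E}_\mu[g_\sigma(\mu)]$ with $g_\sigma(\mu)=\mathbb{E}_{Z\sim\mathcal{N}(0,1)}[\ell_{exp}(\mu+\sigma Z)]$. *)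

(* Defs.v *)
From HB Require Import structures.
From mathcomp Require Import all_boot all_order all_algebra.
From mathcomp Require Import all_classical all_reals all_analysis.
Set Implicit Arguments. Unset Strict Implicit. Unset Printing Implicit Defensive.
Import Order.TTheory GRing.Theory Num.Theory.
Import numFieldNormedType.Exports.
Local Open Scope classical_set_scope.
Local Open Scope ring_scope.

Definition lexp {R : realType} (t : R) : R := expR (- `|t|).

(* g_sigma(mu) = E_{Z ~ N(0,1)} [ l_exp(mu + sigma Z) ]  (extended-real valued,
   nonnegative integrand so always well defined) *)
Definition g_sigma {R : realType} (sigma mu : R) : \bar R :=
  (\int[@lebesgue_measure R]_z (normal_pdf 0 1 z * lexp (mu + sigma * z))%:E)%E.

(* L(w) = E_mu [ g_sigma(mu) ] where mu = w1^T x1 has Lebesgue density p *)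
Definition Lw {R : realType} (p : R -> R) (sigma : R) : \bar R :=
  (\int[@lebesgue_measure R]_mu ((p mu)%:E * g_sigma sigma mu))%E.

Definition score {R : realType} (p : R -> R) (mu : R) : R :=
  (derive1 p mu) / p mu.

(* Main.v *)
Require Import Defs.
From HB Require Import structures.
From mathcomp Require Import all_boot all_order all_algebra.
From mathcomp Require Import all_classical all_reals all_analysis.
From mathcomp Require Import ring lra measurable_realfun.
Import Order.TTheory GRing.Theory Num.Theory.
Import numFieldNormedType.Exports.
Local Open Scope classical_set_scope.
Local Open Scope ring_scope.

Section Aux.
Variable R : realType.
Local Notation mu := (@lebesgue_measure R).

Lemma mono_int (f g : R -> \bar R) : (forall x, (0 <= f x)%E) -> (forall x, (f x <= g x)%E) ->
  (\int[mu]_x f x <= \int[mu]_x g x)%E.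
Proof.
move=> f0 fg.
have g0 : forall x, (0 <= g x)%E by move=> x; exact: le_trans (f0 x) (fg x).
rewrite !ge0_integralTE//; apply: ereal_sup_le => _ [h /= hf <-].
exists h => //= x; exact: le_trans (hf x) (fg x).
Qed.

Lemma peak_ge : 1/3 <= normal_peak (1:R).
Proof.
rewrite /normal_peak expr1n mul1r; set s := Num.ExtraDef.sqrtr _.
have hp : pi < 4 :> R by have := @pihalf_lt2 R; lra.
have h0 : 0 < 1 * pi *+ 2 :> R by rewrite mul1r mulrn_wgt0 // pi_gt0.
have hs : 0 < s by rewrite /s sqrtr_gt0.
have hs3 : s ^+ 2 < 9 by rewrite /s sqr_sqrtr ?ltW // mul1r mulr2n; lra.
have hv : s^-1 * s = 1 by rewrite mulVf // gt_eqF.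
have hv0 : 0 < s^-1 by rewrite invr_gt0.
nra.
Qed.

Lemma expR_lb t : 0 <= t <= 4 -> (1 - t/4)^+4 <= expR (- t) :> R.
Proof.
move=> /andP[t0 t4].
have -> : - t = 4%:R * (- t/4) by lra.
rewrite expRM_natl; apply: lerXn2r; rewrite ?nnegrE ?expR_ge0 //; first lra.
by have := expR_ge1Dx (- t/4); rewrite mulNr.
Qed.

Lemma band (b z : R) : 0 <= b -> b^+2/2 + b <= 4 -> `|z| <= b ->
  (1 - (b^+2/2+b)/4)^+4/3 <= normal_pdf 0 1 z * expR (- `|z|).
Proof.
move=> b0 b4 zb.
rewrite normal_pdfE ?oner_neq0 // /normal_fun subr0 expr1n.
set c := (1 - _ / 4) ^+ 4.
have c0 : 0 <= c by rewrite /c exprn_even_ge0.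
have hz0 := normr_ge0 z.
have hzz : z ^+ 2 = `|z| ^+ 2 by rewrite real_normK ?num_real.
have hE : c <= expR (- z ^+ 2 / 2) * expR (- `|z|).
  rewrite -expRD.
  apply: (le_trans (expR_lb (b ^+ 2 / 2 + b) _)); first by apply/andP; split => //; nra.
  rewrite ler_expR hzz; nra.
have := peak_ge; have := expR_ge0 (- z ^+ 2 / 2); have := expR_ge0 (- `|z|); nra.
Qed.


Lemma indI (a z : R) : \1_(`[(- a)%R, a]%classic) z = ((`|z| <= a)%R%:R : R).
Proof. by rewrite indicE mem_setE in_itv /= ler_norml. Qed.

Lemma int_ind (a c : R) : 0 < a -> 0 <= c ->
  (\int[mu]_z (c * \1_(`[(- a)%R, a]%classic) z)%:E = (c * (a *+ 2))%:E)%E.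
Proof.
move=> a0 c0.
under eq_integral do rewrite EFinM.
rewrite ge0_integralZl_EFin //; last first.
  by apply/measurable_EFinP; exact: measurable_indic.
rewrite integral_indic // setIT.
have H := @lebesgue_measure_itv R `[(- a)%R, a]. rewrite /= in H.
transitivity (c%:E * (a + a)%:E)%E; last by rewrite -EFinM mulr2n.
congr (_ * _)%E.
  apply: (etrans H); rewrite lte_fin.
  have -> : (- a < a)%R by lra.
  by rewrite opprK.
Qed.

Definition cc (b : R) := (1 - (b ^+ 2 / 2 + b) / 4) ^+ 4 / 3.

Lemma cc_num : [/\ 0 <= cc (3/4), cc (3/4) <= cc (1/2), cc (1/2) <= cc (1/4)
   & 1/4 <= (cc (1/4) + cc (1/2) + cc (3/4)) / 2].
Proof. rewrite /cc !exprS !expr0; split; lra. Qed.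

Definition hh (z : R) := cc (3/4) * \1_(`[(- (3/4))%R, 3/4]%classic) z
  + (cc (1/2) - cc (3/4)) * \1_(`[(- (1/2))%R, 1/2]%classic) z
  + (cc (1/4) - cc (1/2)) * \1_(`[(- (1/4))%R, 1/4]%classic) z.

Lemma hh_le z : 0 <= hh z <= normal_pdf 0 1 z * expR (- `|z|).
Proof.
have [n0 n1 n2 n3] := cc_num.
have b1 := @band (1/4) z; have b2 := @band (1/2) z; have b3 := @band (3/4) z.
rewrite /cc in n0 n1 n2 n3 b1 b2 b3 *.
have hz := normr_ge0 z.
have p0 : 0 <= normal_pdf 0 1 z * expR (- `|z|) by rewrite mulr_ge0 ?normal_pdf_ge0 ?expR_ge0.
rewrite /hh !indI /cc.
case: (lerP `|z| (1/4)) => h1; case: (lerP `|z| (1/2)) => h2;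
  case: (lerP `|z| (3/4)) => h3; rewrite ?mulr1 ?mulr0 ?addr0 ?add0r.
all: try (exfalso; lra).
- have := b1 ltac:(lra) ltac:(rewrite !exprS expr0; lra) h1 => H; apply/andP; split; lra.
- have := b2 ltac:(lra) ltac:(rewrite !exprS expr0; lra) h2 => H; apply/andP; split; lra.
- have := b3 ltac:(lra) ltac:(rewrite !exprS expr0; lra) h3 => H; apply/andP; split; lra.
- by apply/andP; split.
Qed.

Lemma e0 (x : R) : 0 <= x -> (0 <= x%:E)%E.
Proof. by rewrite lee_fin. Qed.

Lemma meas_ci (a c : R) : measurable_fun setT (fun z => (c * \1_(`[(- a)%R, a]%classic) z)%:E).
Proof.
apply/measurable_EFinP; apply: measurable_funM => //; exact: measurable_indic.
Qed.

Lemma gauss : ((1/4)%:E <= \int[mu]_z (normal_pdf 0 1 z * expR (- `|z|))%:E)%E.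
Proof.
have [n0 n1 n2 n3] := cc_num.
apply: (@le_trans _ _ (\int[mu]_z (hh z)%:E)%E); last first.
  apply: mono_int => x; rewrite lee_fin; have /andP[] := hh_le x => //.
rewrite /hh.
under eq_integral do rewrite EFinD.
rewrite ge0_integralD //; last 4 first.
- by move=> x _; apply: e0; apply: addr_ge0; apply: mulr_ge0; rewrite ?indic_ge0 ?subr_ge0.
- by apply/measurable_EFinP; apply: measurable_funD; apply: measurable_funM => //; exact: measurable_indic.
- by move=> x _; apply: e0; apply: mulr_ge0; rewrite ?indic_ge0 ?subr_ge0.
- exact: meas_ci.
under eq_integral do rewrite EFinD.
rewrite ge0_integralD //; last 4 first.
- by move=> x _; apply: e0; apply: mulr_ge0; rewrite ?indic_ge0 ?subr_ge0.
- exact: meas_ci.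
- by move=> x _; apply: e0; apply: mulr_ge0; rewrite ?indic_ge0 ?subr_ge0.
- exact: meas_ci.
have n1' : 0 <= cc (1/2) - cc (3/4) by lra.
have n2' : 0 <= cc (1/4) - cc (1/2) by lra.
rewrite (@int_ind (3/4) _ ltac:(lra) n0).
rewrite (@int_ind (1/2) _ ltac:(lra) n1').
rewrite (@int_ind (1/4) _ ltac:(lra) n2').
rewrite -!EFinD lee_fin; lra.
Qed.

Lemma meas_pe : measurable_fun setT (fun z : R => (normal_pdf 0 1 z * expR (- `|z|))%:E).
Proof.
apply/measurable_EFinP; apply: measurable_funM; first exact: measurable_normal_pdf.
apply: continuous_measurable_fun => x.
apply: continuous_comp; last exact: continuous_expR.
apply: continuousN; exact: norm_continuous.
Qed.

Lemma gsig_lb (s m : R) : 0 <= s <= 1 -> ((expR (- `|m|) / 4)%:E <= g_sigma s m)%E.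
Proof.
move=> /andP[s0 s1].
have e0' := expR_ge0 (- `|m|).
apply: (@le_trans _ _ ((expR (- `|m|))%:E * (1/4)%:E)%E).
  by rewrite -EFinM lee_fin mulrA mulr1.
apply: (@le_trans _ _ ((expR (- `|m|))%:E * \int[mu]_z (normal_pdf 0 1 z * expR (- `|z|))%:E)%E).
  by apply: lee_wpmul2l; [rewrite lee_fin | exact: gauss].
rewrite -ge0_integralZl_EFin //; last 2 first.
- by move=> x _; apply: e0; apply: mulr_ge0; [exact: normal_pdf_ge0 | exact: expR_ge0].
- exact: meas_pe.
rewrite /g_sigma; apply: mono_int => z.
  by rewrite -EFinM; apply: e0; apply: mulr_ge0; [exact: expR_ge0 | apply: mulr_ge0; [exact: normal_pdf_ge0 | exact: expR_ge0]].
rewrite -EFinM lee_fin /lexp mulrCA; apply: ler_wpM2l; first exact: normal_pdf_ge0.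
rewrite -expRD ler_expR.
have := ler_normD m (s * z); rewrite normrM (ger0_norm s0).
have := normr_ge0 z; nra.
Qed.

Lemma mvt_mono (f df : R -> R) (a b : R) : a <= b ->
  (forall x : R, is_derive x (1:R) f (df x)) -> (forall x, a <= x <= b -> 0 <= df x) -> f a <= f b.
Proof.
move=> ab hd hdf; case: (eqVneq a b) => [->//|neq].
have lt : a < b by rewrite lt_neqAle neq.
have [c /[!in_itv]/= /andP[c1 c2] E] := MVT lt (fun x _ => hd x)
  (derivable_within_continuous (fun x _ => @ex_derive _ _ _ _ _ _ _ (hd x))).
rewrite -subr_ge0 E; apply: mulr_ge0; last by rewrite subr_ge0.
by apply: hdf; rewrite !ltW.
Qed.

Lemma taylor (F : R -> R) (rho : R) : (forall x, derivable F x 1) ->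
  (forall x, derivable (derive1 F) x 1) -> (forall x, - rho <= (derive1 (derive1 F)) x) ->
  forall x, F 0 + (derive1 F) 0 * x - rho / 2 * x ^+ 2 <= F x.
Proof.
move=> d1 d2 h x.
have dF (t : R) : is_derive t 1 F ((derive1 F) t) by rewrite derive1E; exact: derivableP.
have dF' (t : R) : is_derive t 1 (derive1 F) ((derive1 (derive1 F)) t) by rewrite derive1E; exact: derivableP.
pose psi := (derive1 F) + rho \*: (@id R).
have dpsi (t : R) : is_derive t 1 psi ((derive1 (derive1 F)) t + rho *: 1).
  exact: is_deriveD.
have psi_mono a b : a <= b -> psi a <= psi b.
  move=> ab; apply: (@mvt_mono psi (fun t => derive1 (derive1 F) t + rho *: 1) a b ab dpsi) => t _.
  by have := h t; rewrite /GRing.scale /= mulr1; lra.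
pose phi := F + cst (- F 0) + (- (derive1 F) 0) \*: (@id R) + (rho / 2) \*: ((@id R) ^+ 2).
have dphi (t : R) : is_derive t 1 phi (psi t - psi 0).
  rewrite /phi; apply: is_derive_eq.
  rewrite /psi /= !fctE /GRing.scale /=.
  rewrite /GRing.scale /= expr1 !mulr1 mulr0; field; rewrite ?pnatr_eq0 //.
have phiE (y : R) : phi y = F y - F 0 - (derive1 F) 0 * y + rho / 2 * y ^+ 2.
  rewrite /phi /= !fctE /GRing.scale /= /GRing.scale /=; field; rewrite ?pnatr_eq0 //.
have phi0 : phi 0 = 0 by rewrite phiE; field; rewrite ?pnatr_eq0 //.
suff : 0 <= phi x by rewrite phiE; lra.
rewrite -phi0.
case: (lerP 0 x) => hx.
  apply: (@mvt_mono phi (fun t => psi t - psi 0) 0 x hx dphi) => t /andP[t0 _].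
  by rewrite subr_ge0; apply: psi_mono.
have hx' := ltW hx.
rewrite -[phi x]opprK -[phi 0]opprK lerNr opprK.
have dN (t : R) : is_derive t 1 (- phi) (- (psi t - psi 0)) by apply: is_deriveN.
apply: (@mvt_mono (- phi) (fun t => - (psi t - psi 0)) x 0 hx' dN) => t /andP[_ t0].
by rewrite oppr_ge0 subr_le0; apply: psi_mono.
Qed.


Lemma score_eq (p : R -> R) : (forall x, 0 < p x) -> (forall x, derivable ((@ln R) \o p) x 1) ->
  score p 0 = derive1 ((@ln R) \o p) 0.
Proof.
move=> hp hd.
have pE : p = expR \o ((@ln R) \o p).
  by apply/funext => x /=; rewrite lnK // posrE.
have dF : is_derive (0:R) 1 ((@ln R) \o p) (derive1 ((@ln R) \o p) 0).
  by rewrite derive1E; exact: derivableP.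
have dp : is_derive (0:R) 1 p (expR (((@ln R) \o p) 0) * derive1 ((@ln R) \o p) 0).
  rewrite [X in is_derive _ _ X _]pE; exact: is_derive1_comp.
rewrite /score derive1E derive_val /= lnK ?posrE //.
by rewrite mulrC mulKf // gt_eqF.
Qed.

Lemma H_cont (c a r : R) : continuous (fun m : R => c * expR (a * m - r * m ^+ 2 - `|m|)).
Proof.
move=> x.
apply: cvgM; first exact: cvg_cst.
apply: continuous_comp; last exact: continuous_expR.
apply: cvgB; last exact: norm_continuous.
apply: cvgB.
  apply: cvgM; [exact: cvg_cst | exact: cvg_id].
apply: cvgM; first exact: cvg_cst.
exact: exprn_continuous.
Qed.

Lemma E_cont (a r : R) : continuous (fun m : R => expR (a * m - r * m ^+ 2)).
Proof.
move=> x.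
apply: continuous_comp; last exact: continuous_expR.
apply: cvgB.
  apply: cvgM; [exact: cvg_cst | exact: cvg_id].
apply: cvgM; first exact: cvg_cst.
exact: exprn_continuous.
Qed.
End Aux.

Theorem claim3 (R : realType) (p : R -> R) (sigma nu rho : R)
  (* p is a probability density of mu = w1^T x1 (positive, so log p is defined) *)
  (hp_pos : forall x, 0 < p x)
  (hp_int : (\int[@lebesgue_measure R]_x (p x)%:E = 1)%E)
  (* log p twice differentiable with -rho <= (log p)'' <= -nu, 0 < nu <= rho *)
  (hnu : 0 < nu) (hnurho : nu <= rho)
  (hd1 : forall x, derivable ((@ln R) \o p) x 1)
  (hd2 : forall x, derivable (derive1 ((@ln R) \o p)) x 1)
  (hconc : forall x, - rho <= derive1 (derive1 ((@ln R) \o p)) x <= - nu)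
  (* sigma = sqrt(w2^T Sigma2 w2) >= 0, and sigma <= 1 *)
  (hsig0 : 0 <= sigma) (hsig1 : sigma <= 1) :
  (Lw p sigma >=
     ((1/4) * p 0)%:E *
     \int[@lebesgue_measure R]_(d in `[0%R, +oo[%classic)
        (expR ((`|score p 0| - 1) * d - rho / 2 * d ^+ 2))%:E)%E.
Proof.
set F := (@ln R) \o p.
have hs0 : score p 0 = derive1 F 0 := @score_eq R p hp_pos hd1.
rewrite hs0; set s0 := derive1 F 0.
have tay := @taylor R F rho hd1 hd2 (fun x => proj1 (andP (hconc x))).
have pb m : p 0 * expR (s0 * m - rho / 2 * m ^+ 2) <= p m.
  have := tay m; rewrite -/s0 /F /= => T.
  rewrite -[p m](@lnK R) ?posrE // -[p 0](@lnK R) ?posrE // -expRD ler_expR.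
  lra.
pose c := 1 / 4 * p 0.
have c0 : 0 <= c by rewrite /c mulr_ge0 // ltW.
pose H := fun m : R => c * expR (s0 * m - rho / 2 * m ^+ 2 - `|m|).
have H0 m : 0 <= H m by rewrite /H mulr_ge0 // expR_ge0.
have mH : measurable_fun setT (fun m => (H m)%:E).
  apply/measurable_EFinP; apply: continuous_measurable_fun; exact: H_cont.
have stepA : (\int[lebesgue_measure]_m (H m)%:E <= Lw p sigma)%E.
  rewrite /Lw; apply: mono_int => m; first exact: e0.
  have hpm := hp_pos m.
  apply: (@le_trans _ _ ((p m)%:E * (expR (- `|m|) / 4)%:E)%E); last first.
    apply: lee_wpmul2l; first by rewrite lee_fin ltW.
    by apply: gsig_lb; rewrite hsig0 hsig1.
  rewrite -EFinM lee_fin /H /c.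
  have -> : expR (s0 * m - rho / 2 * m ^+ 2 - `|m|) =
    expR (s0 * m - rho / 2 * m ^+ 2) * expR (- `|m|) by rewrite -expRD.
  have := pb m; have := expR_ge0 (- `|m|); have := expR_ge0 (s0 * m - rho / 2 * m ^+ 2).
  set A := expR (s0 * m - _); set B := expR _.
  nra.
apply: le_trans stepA.
pose E := fun d : R => expR ((`|s0| - 1) * d - rho / 2 * d ^+ 2).
have mE : measurable_fun (`[0%R, +oo[%classic : set R) (fun d : R => (E d)%:E).
  apply: measurable_funS (subsetT _) _ => //.
  apply/measurable_EFinP; apply: continuous_measurable_fun; exact: E_cont.
have IZ : (\int[lebesgue_measure]_(d in `[0%R, +oo[%classic) (c * E d)%:E =
    c%:E * \int[lebesgue_measure]_(d in `[0%R, +oo[%classic) (E d)%:E)%E.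
  under eq_integral do rewrite EFinM.
  rewrite ge0_integralZl_EFin //.
  by move=> x _; apply: e0; exact: expR_ge0.
rewrite -IZ.
case: (lerP 0 s0) => hs.
- have -> : (\int[lebesgue_measure]_(d in `[0%R, +oo[%classic) (c * E d)%:E =
      \int[lebesgue_measure]_(d in `[0%R, +oo[%classic) (H d)%:E)%E.
    apply: eq_integral => d /[!inE] /= /[!in_itv] /= /andP[d0 _].
    rewrite /H /E; congr (EFin (c * expR _)); rewrite (ger0_norm hs) (ger0_norm d0); ring.
  apply: ge0_subset_integral => //; by move=> x _; apply: e0.
- have hsub := @ge0_integration_by_substitutionNy R H 0.
  rewrite oppr0 in hsub.
  have -> : (\int[lebesgue_measure]_(d in `[0%R, +oo[%classic) (c * E d)%:E =
      \int[lebesgue_measure]_(d in `]-oo, 0%R]%classic) (H d)%:E)%E.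
    rewrite hsub; last 2 first.
    + apply: continuous_subspaceT; exact: H_cont.
    + by move=> x _.
    apply: eq_integral => d /[!inE] /= /[!in_itv] /= /andP[d0 _].
    rewrite /H /E /=; congr (EFin (c * expR _)).
    rewrite (ltr0_norm hs) normrN (ger0_norm d0); ring.
  apply: ge0_subset_integral => //; by move=> x _; apply: e0.
Qed.
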